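(* Let $U$ be a unitary operator on a Hilbert space $K$, and let $\mathcal{L}$ and $\mathcal{L}'$ be finite-dimensional wandering subspaces for $U$. Set $$M(\mathcal{L}) := \bigoplus_{n=-\infty}^{\infty} U^n\mathcal{L}, \qquad M(\mathcal{L}') := \bigoplus_{n=-\infty}^{\infty} U^n\mathcal{L}'.$$ Then, writing $P_S$ for the orthogonal projection onto a closed subspace $S$, $$\operatorname{tr}(P_{\mathcal{L}} P_{M(\mathcal{L}')}) = \operatorname{tr}(P_{\mathcal{L}'} P_{M(\mathcal{L})}).$$
   Context: A closed subspace $\mathcal{S}$ of $K$ is a wandering subspace for the unitary $U$ if the subspaces $U^n\mathcal{S}$, $n\in\mathbb{Z}$, are pairwise orthogonal. The direct sums above are orthogonal direct sums (closed linear spans). *)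

(* Defs.v *)
From HB Require Import structures.
From mathcomp Require Import all_boot all_order all_algebra.
From mathcomp Require Import complex.
From mathcomp Require Import all_classical all_reals all_analysis.
Import numFieldNormedType.Exports.
Import Order.TTheory GRing.Theory Num.Theory.

Set Implicit Arguments.
Unset Strict Implicit.
Unset Printing Implicit Defensive.

Local Open Scope classical_set_scope.
Local Open Scope ring_scope.
Local Open Scope complex_scope.

Section Hilbert.
Variable R : realType.
Variable V : completeNormedModType R[i].
Implicit Types (ip : V -> V -> R[i]) (S : set V) (U : V -> V).

(* ip is an inner product (linear in the first variable, conjugate
   symmetric) inducing the norm of V; V being complete, (V, ip) is a
   complex Hilbert space. *)
Definition inner_product ip : Prop :=
  [/\ forall (a : R[i]) (x y z : V), ip (a *: x + y) z = a * ip x z + ip y z,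
      forall x y : V, ip y x = (ip x y)^* &
      forall x : V, ip x x = `|x| ^+ 2].

Definition unitary ip U : Prop :=
  [/\ forall (a : R[i]) (x y : V), U (a *: x + y) = a *: U x + U y,
      bijective U &
      forall x y : V, ip (U x) (U y) = ip x y].

Definition span S : set V :=
  [set x | exists (n : nat) (v : 'I_n -> V) (c : 'I_n -> R[i]),
     (forall i, S (v i)) /\ x = \sum_(i < n) c i *: v i].

Definition closed_subspace S : Prop :=
  [/\ S 0, (forall (a : R[i]) (x y : V), S x -> S y -> S (a *: x + y))
    & closed S].

Definition finite_dim S : Prop :=
  exists s : seq V, S = span [set x | x \in s].

(* U^n S for n : int (U^-m S is the preimage of S under U^m, i.e. the
   image of S under (U^-1)^m since U is bijective) *)
Definition upow_set U (n : int) S : set V :=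
  match n with
  | Posz m => iter m U @` S
  | Negz m => iter m.+1 U @^-1` S
  end.

Definition wandering ip U S : Prop :=
  closed_subspace S /\
  forall n m : int, n != m -> forall x y : V,
    upow_set U n S x -> upow_set U m S y -> ip x y = 0.

Definition Mspace U S : set V :=
  closure (span [set x | exists n : int, upow_set U n S x]).

Definition oproj ip S (x : V) : V :=
  xget 0 [set p | S p /\ forall y, S y -> ip (x - p) y = 0].

Definition orthonormal ip (e : seq V) : Prop :=
  forall i j : nat, (i < size e)%N -> (j < size e)%N ->
    ip e`_i e`_j = (i == j)%:R.

Definition range_onb ip (T : V -> V) (e : seq V) : Prop :=
  orthonormal ip e /\
  forall x, exists c : 'I_(size e) -> R[i], T x = \sum_(i < size e) c i *: e`_i.

(* Trace of a finite-rank operator T: sum_k <T e_k, e_k> over an orthonormal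
   basis e of a finite-dimensional subspace containing the range of T
   (extend e to an orthonormal basis of V: the remaining terms vanish). *)
Definition trace ip (T : V -> V) : R[i] :=
  let e := xget [::] (range_onb ip T) in
  \sum_(k < size e) ip (T e`_k) e`_k.

End Hilbert.

(* Main.v *)
Require Import Defs.
From HB Require Import structures.
From mathcomp Require Import all_boot all_order all_algebra.
From mathcomp Require Import complex.
From mathcomp Require Import all_classical all_reals all_analysis.
From mathcomp Require Import ring lra zify.
Import numFieldNormedType.Exports numFieldTopology.Exports.
Import Order.TTheory GRing.Theory Num.Theory.
Local Open Scope classical_set_scope.
Local Open Scope ring_scope.

Module Helpers.
Set Implicit Arguments.
Unset Strict Implicit.
Unset Printing Implicit Defensive.
Local Open Scope complex_scope.

Section IP.
Variable R : realType.
Variable V : completeNormedModType R[i].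
Variable ip : V -> V -> R[i].
Hypothesis Hip : inner_product ip.

Lemma ipAl a x y z : ip (a *: x + y) z = a * ip x z + ip y z.
Proof. by case: Hip. Qed.
Lemma ipC x y : ip y x = (ip x y)^*.
Proof. by case: Hip. Qed.
Lemma ipxx x : ip x x = `|x| ^+ 2.
Proof. by case: Hip. Qed.

Lemma ip0l z : ip 0 z = 0.
Proof.
have := ipAl 1 0 0 z; rewrite scale1r addr0 mul1r => h.
by apply/(addrI (ip 0 z)); rewrite addr0 -h.
Qed.
Lemma ipDl x y z : ip (x + y) z = ip x z + ip y z.
Proof. by rewrite -[x]scale1r ipAl mul1r scale1r. Qed.
Lemma ipZl a x z : ip (a *: x) z = a * ip x z.
Proof. by rewrite -[a *: x]addr0 ipAl ip0l addr0. Qed.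
Lemma ipNl x z : ip (- x) z = - ip x z.
Proof. by rewrite -scaleN1r ipZl mulN1r. Qed.
Lemma ipBl x y z : ip (x - y) z = ip x z - ip y z.
Proof. by rewrite ipDl ipNl. Qed.
Lemma ip0r z : ip z 0 = 0.
Proof. by rewrite ipC ip0l conjc0. Qed.
Lemma ipDr x y z : ip z (x + y) = ip z x + ip z y.
Proof. by rewrite ipC ipDl (ipC x z) (ipC y z) rmorphD. Qed.
Lemma ipZr a x z : ip z (a *: x) = a^* * ip z x.
Proof. by rewrite ipC ipZl (ipC x z) rmorphM. Qed.
Lemma ipNr x z : ip z (- x) = - ip z x.
Proof. by rewrite ipC ipNl (ipC x z) rmorphN. Qed.
Lemma ipBr x y z : ip z (x - y) = ip z x - ip z y.
Proof. by rewrite ipDr ipNr. Qed.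

Lemma ip_suml (I : Type) (r : seq I) (P : pred I) (F : I -> V) z :
  ip (\sum_(i <- r | P i) F i) z = \sum_(i <- r | P i) ip (F i) z.
Proof. by apply: (big_morph (fun x => ip x z)) => [x y|]; rewrite ?ipDl ?ip0l. Qed.
Lemma ip_sumr (I : Type) (r : seq I) (P : pred I) (F : I -> V) z :
  ip z (\sum_(i <- r | P i) F i) = \sum_(i <- r | P i) ip z (F i).
Proof. by apply: (big_morph (fun x => ip z x)) => [x y|]; rewrite ?ipDr ?ip0r. Qed.

Lemma ipxx_ge0 x : 0 <= ip x x.
Proof. by rewrite ipxx exprn_ge0. Qed.
Lemma ipxx_eq0 x : ip x x = 0 -> x = 0.
Proof. by rewrite ipxx => /eqP; rewrite sqrf_eq0 normr_eq0 => /eqP. Qed.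

Lemma conjcM' (a b : R[i]) : conjc (a * b) = conjc a * conjc b.
Proof. exact: rmorphM. Qed.
Lemma conjcV' (a : R[i]) : conjc (a^-1) = (conjc a)^-1.
Proof. exact: fmorphV. Qed.
Lemma normCK' (a : R[i]) : `|a| ^+ 2 = a * conjc a.
Proof. exact: normCK. Qed.

Lemma CS x y : `|ip x y| <= `|x| * `|y|.
Proof.
have [->|y0] := eqVneq y 0; first by rewrite ip0r normr0 normr0 mulr0.
set c := ip y y.
have c0 : c != 0 by apply/eqP => /ipxx_eq0; apply/eqP.
have cge : 0 <= c by apply: ipxx_ge0.
have cc : conjc c = c by rewrite /c -ipC.
set t := ip x y / c.
set z := x - t *: y.
have zy : ip z y = 0 by rewrite /z ipBl ipZl /t -/c mulfVK // subrr.
have yz : ip y z = 0 by rewrite ipC zy conjc0.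
have xz : x = z + t *: y by rewrite /z subrK.
have ex : ip x x = ip z z + t * conjc t * c.
  clearbody z; rewrite xz ipDl !ipDr !ipZl !ipZr zy yz -/c; ring.
have H : `|ip x y| ^+ 2 <= (`|x| * `|y|) ^+ 2.
  rewrite exprMn -!ipxx -/c.
  have -> : `|ip x y| ^+ 2 = t * conjc t * c * c.
    by rewrite normCK' /t conjcM' conjcV' cc; field.
  rewrite ex mulrDl lerDr mulr_ge0 //; exact: ipxx_ge0.
by rewrite -(ler_pXn2r (n:=2)) // ?nnegrE // mulr_ge0.
Qed.

End IP.

Section Span.
Variable R : realType.
Variable V : completeNormedModType R[i].
Implicit Types S E : set V.

Definition lin_closed E := E 0 /\ forall (a : R[i]) x y, E x -> E y -> E (a *: x + y).

Lemma lin_sum E (I : Type) (r : seq I) (P : pred I) (F : I -> V) :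
  lin_closed E -> (forall i, P i -> E (F i)) -> E (\sum_(i <- r | P i) F i).
Proof.
move=> [E0 El] HF; apply: big_ind => //.
  by move=> x y Ex Ey; rewrite -[x]scale1r; apply: El.
Qed.

Lemma lin_scale E a x : lin_closed E -> E x -> E (a *: x).
Proof. by move=> [E0 El] Ex; rewrite -[_ *: _]addr0; apply: El. Qed.

Lemma lin_comb2 E a b x y : lin_closed E -> E x -> E y -> E (a *: x + b *: y).
Proof. by move=> hE Ex Ey; apply: hE.2 => //; apply: lin_scale. Qed.

Lemma span_sub S E : lin_closed E -> S `<=` E -> Defs.span S `<=` E.
Proof.
move=> hE SE x [n [v [c [Sv ->]]]]; apply: lin_sum => // i _.
by rewrite -[_ *: _]addr0; apply hE.2 => //; [apply: SE | apply: hE.1].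
Qed.

Lemma span_in S x : S x -> Defs.span S x.
Proof.
move=> Sx; exists 1%N, (fun _ => x), (fun _ => 1); split => //.
by rewrite big_ord1 scale1r.
Qed.

Lemma span_mono S S' : S `<=` S' -> Defs.span S `<=` Defs.span S'.
Proof. by move=> SS x [n [v [c [Sv ->]]]]; exists n, v, c; split => // i; apply: SS. Qed.

Lemma span_lin S : lin_closed (Defs.span S).
Proof.
split; first by exists 0%N, (fun _ => 0), (fun _ => 0); split; [by case | by rewrite big_ord0].
move=> a x y [n1 [v1 [c1 [S1 ->]]]] [n2 [v2 [c2 [S2 ->]]]].
exists (n1 + n2)%N, (fun i => match fintype.split i with inl j => v1 j | inr j => v2 j end),
  (fun i => match fintype.split i with inl j => a * c1 j | inr j => c2 j end); split.
  by move=> i; case: (fintype.split i).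
rewrite big_split_ord /= scaler_sumr; congr (_ + _); apply: eq_bigr => i _.
  by rewrite (unsplitK (inl _)) scalerA.
by rewrite (unsplitK (inr _)).
Qed.

End Span.

Section ONB.
Variable R : realType.
Variable V : completeNormedModType R[i].
Variable ip : V -> V -> R[i].
Hypothesis Hip : inner_product ip.

Definition prj (e : seq V) (x : V) : V := \sum_(k < size e) ip x e`_k *: e`_k.

Lemma on_comb (e : seq V) (c : nat -> R[i]) (j : 'I_(size e)) :
  Defs.orthonormal ip e -> ip (\sum_(k < size e) c k *: e`_k) e`_j = c j.
Proof.
move=> oe; rewrite (ip_suml Hip) (bigD1 j) //= big1 => [|k kj].
  by rewrite (ipZl Hip) oe // eqxx mulr1 addr0.
by rewrite (ipZl Hip) oe // (_ : (k == j :> nat) = false) ?mulr0 //; apply/negbTE.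
Qed.

Lemma comb_proj (e : seq V) (c : nat -> R[i]) :
  Defs.orthonormal ip e -> \sum_(k < size e) c k *: e`_k = prj e (\sum_(k < size e) c k *: e`_k).
Proof. by move=> oe; apply: eq_bigr => k _; rewrite on_comb. Qed.

Lemma prjA (e : seq V) a x y : prj e (a *: x + y) = a *: prj e x + prj e y.
Proof.
rewrite /prj scaler_sumr -big_split /=; apply: eq_bigr => k _.
by rewrite (ipAl Hip) scalerDl scalerA.
Qed.

Lemma proj_lin (e : seq V) : lin_closed (fun y => y = prj e y).
Proof.
split; first by rewrite /prj big1 // => k _; rewrite (ip0l Hip) scale0r.
by move=> a x y hx hy; rewrite prjA -hx -hy.
Qed.

Lemma proj_perp (e : seq V) x j : Defs.orthonormal ip e -> (j < size e)%N ->
  ip (x - prj e x) e`_j = 0.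
Proof.
move=> oe je; rewrite (ipBl Hip).
by rewrite (on_comb (fun k => ip x e`_k) (Ordinal je)) // subrr.
Qed.

Lemma perp_comb (e : seq V) z y : (forall j, (j < size e)%N -> ip z e`_j = 0) ->
  y = prj e y -> ip z y = 0.
Proof.
move=> hz ->; rewrite (ip_sumr Hip) big1 // => k _.
by rewrite (ipZr Hip) hz // mulr0.
Qed.

Lemma on_rcons (e : seq V) u : Defs.orthonormal ip e ->
  (forall j, (j < size e)%N -> ip u e`_j = 0) -> ip u u = 1 ->
  Defs.orthonormal ip (rcons e u).
Proof.
move=> oe ue uu i j; rewrite size_rcons !ltnS !nth_rcons => hi hj.
have [ilt|ige] := ltnP i (size e); have [jlt|jge] := ltnP j (size e).
- exact: oe.
- have -> : j = size e by apply/eqP; rewrite eqn_leq hj jge.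
  rewrite eqxx (ipC Hip) ue // conjc0.
  by rewrite (_ : (i == size e) = false) // ltn_eqF.
- have -> : i = size e by apply/eqP; rewrite eqn_leq hi ige.
  rewrite eqxx ue //.
  by rewrite (_ : (size e == j) = false) // eq_sym ltn_eqF.
- have -> : i = size e by apply/eqP; rewrite eqn_leq hi ige.
  have -> : j = size e by apply/eqP; rewrite eqn_leq hj jge.
  by rewrite eqxx uu.
Qed.

Lemma sum_rcons (e : seq V) u (c : nat -> R[i]) :
  \sum_(k < size (rcons e u)) c k *: (rcons e u)`_k =
  \sum_(k < size e) c k *: e`_k + c (size e) *: u.
Proof.
rewrite -(big_mkord xpredT (fun k => c k *: (rcons e u)`_k)) size_rcons big_nat_recr //=.
rewrite nth_rcons ltnn eqxx big_mkord; congr (_ + _).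
by apply: eq_bigr => k _; rewrite nth_rcons ltn_ord.
Qed.

Lemma proj_rcons (e : seq V) u y : Defs.orthonormal ip (rcons e u) ->
  y = prj e y -> y = prj (rcons e u) y.
Proof.
move=> oe' hy.
have := comb_proj (fun k => if (k < size e)%N then ip y e`_k else 0) oe'.
rewrite (sum_rcons e u (fun k => if (k < size e)%N then ip y e`_k else 0)) ltnn scale0r addr0.
have -> : \sum_(k < size e) (if (k < size e)%N then ip y e`_k else 0) *: e`_k = y.
  by rewrite [RHS]hy; apply: eq_bigr => k _; rewrite ltn_ord.
by [].
Qed.

Lemma GS (s : seq V) : exists e, [/\ Defs.orthonormal ip e,
  (forall k, (k < size e)%N -> Defs.span [set x | x \in s] e`_k) &
  (forall y, Defs.span [set x | x \in s] y -> y = prj e y)].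
Proof.
elim: s => [|v s [e [oe es ep]]].
  exists [::]; split => //.
  move=> y; apply: (@span_sub _ _ _ _ (proj_lin _)).
  by move=> x /=; rewrite in_nil.
have sub : Defs.span [set x | x \in s] `<=` Defs.span [set x | x \in v :: s].
  by apply: span_mono => x /=; rewrite inE => ->; rewrite orbT.
set w := v - prj e v.
have wperp j : (j < size e)%N -> ip w e`_j = 0 by move=> je; apply: proj_perp.
have [w0|wn0] := eqVneq w 0.
  exists e; split => // [k ke|]; first by apply: sub; apply: es.
  apply: (@span_sub _ _ _ _ (proj_lin _)).
  move=> x /=; rewrite inE => /orP[/eqP ->|xs]; last by apply: ep; apply: span_in.
  by apply/eqP; rewrite -subr_eq0 -/w w0.
set u := (`|w|)^-1 *: w.
have nw : `|w| != 0 by rewrite normr_eq0.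
have uperp j : (j < size e)%N -> ip u e`_j = 0.
  by move=> je; rewrite (ipZl Hip) wperp // mulr0.
have uu : ip u u = 1.
  by rewrite (ipxx Hip) normrZ normfV normr_id mulVf // expr1n.
have oe' : Defs.orthonormal ip (rcons e u) by apply: on_rcons.
exists (rcons e u); split => //.
- move=> k; rewrite size_rcons ltnS nth_rcons leq_eqVlt => /orP[/eqP ->|ke].
    rewrite ltnn eqxx /u /w.
    have [L0 Ll] := span_lin [set x | x \in v :: s].
    rewrite scalerBr -scaleNr; apply: lin_comb2; first exact: span_lin.
      by apply: span_in; rewrite /= inE eqxx.
    apply: lin_sum => [|k' _]; first exact: span_lin.
    apply: lin_scale; first exact: span_lin.
    by apply: sub; apply: es.
  by rewrite ke; apply: sub; apply: es.
- apply: (@span_sub _ _ _ _ (proj_lin _)).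
  move=> x /=; rewrite inE => /orP[/eqP ->|xs]; last first.
    by apply: proj_rcons => //; apply: ep; apply: span_in.
  have := comb_proj (fun k => if (k < size e)%N then ip v e`_k else `|w|) oe'.
  rewrite (sum_rcons e u (fun k => if (k < size e)%N then ip v e`_k else `|w|)) ltnn /u scalerA mulfV // scale1r.
  have -> : \sum_(k < size e) (if (k < size e)%N then ip v e`_k else `|w|) *: e`_k
     = prj e v by apply: eq_bigr => k _; rewrite ltn_ord.
  by rewrite /w addrC subrK.
Qed.

Lemma oproj_eq (S : set V) x p : S p -> (forall y, S y -> ip (x - p) y = 0) ->
  oproj ip S x = p.
Proof.
move=> Sp hp; rewrite /oproj; case: xgetP => [q _ [Sq hq]|]; last first.
  by move=> /(_ p) []; split.
have h y : S y -> ip (p - q) y = 0.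
  move=> Sy; have -> : p - q = (x - q) - (x - p) by rewrite opprB [RHS]addrC [RHS]addrA subrK.
  by rewrite (ipBl Hip) hq // hp // subrr.
apply/eqP; rewrite eq_sym -subr_eq0; apply/eqP; apply: (ipxx_eq0 Hip).
by rewrite (ipBr Hip) h // h // subrr.
Qed.

Lemma oproj_fd (s e : seq V) x :
  Defs.orthonormal ip e ->
  (forall k, (k < size e)%N -> Defs.span [set x | x \in s] e`_k) ->
  (forall y, Defs.span [set x | x \in s] y -> y = prj e y) ->
  oproj ip (Defs.span [set x | x \in s]) x = prj e x.
Proof.
move=> oe es ep; apply: oproj_eq.
  apply: lin_sum => [|k _]; first exact: span_lin.
  rewrite -[_ *: _]addr0; apply: (span_lin _).2; first exact: es.
  exact: (span_lin _).1.
move=> y /ep; apply: perp_comb => j je; exact: proj_perp.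
Qed.

Lemma proj_sa (e : seq V) a b : ip (prj e a) b = ip a (prj e b).
Proof.
rewrite (ip_suml Hip) (ip_sumr Hip); apply: eq_bigr => k _.
by rewrite (ipZl Hip) (ipZr Hip) (ipC Hip b e`_k) mulrC.
Qed.

End ONB.


Section Tr.
Variable R : realType.
Variable V : completeNormedModType R[i].
Variable ip : V -> V -> R[i].
Hypothesis Hip : inner_product ip.

Lemma ip_cvgl (u : nat -> V) p w : u @ \oo --> p ->
  (fun N => (ip (u N) w : R[i]^o)) @ \oo --> (ip p w : R[i]^o).
Proof.
move=> hu; apply/cvgrPdist_lt => e e0.
set c := `|w| + 1.
have c0 : 0 < c by rewrite /c ltr_pwDr.
have [N0 _ H] := (cvgrPdist_lt _ _).1 hu (e / c) (divr_gt0 e0 c0).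
exists N0 => // N /H hN.
rewrite -(ipBl Hip); apply: le_lt_trans (CS Hip _ _) _.
rewrite -[e](@divfK _ c) ?gt_eqF //.
apply: (@le_lt_trans _ _ (`|p - u N| * c)).
  by apply: ler_wpM2l => //; rewrite /c lerDl.
by rewrite ltr_pM2r.
Qed.

Lemma cvg_sumC (I : Type) (r : seq I) (u : I -> nat -> R[i]^o) (a : I -> R[i]^o) :
  (forall i, u i @ \oo --> a i) ->
  (fun N => \sum_(i <- r) u i N) @ \oo --> \sum_(i <- r) a i.
Proof.
move=> hu; elim: r => [|i r IH].
  rewrite big_nil; under eq_fun do rewrite big_nil; exact: cvg_cst.
rewrite big_cons; under eq_fun do rewrite big_cons.
by apply: cvgD; [exact: hu | exact: IH].
Qed.

End Tr.

Section Creal.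
Variable R : realType.
Lemma CrealE (z : R[i]) : 0 <= z -> z = (complex.Re z)%:C.
Proof. by case: z => a b; rewrite lecE /= => /andP[/eqP -> _]. Qed.
Lemma CB (a b : R) : (a%:C - b%:C) = (a - b)%:C :> R[i].
Proof. by rewrite rmorphB. Qed.
Lemma CX (a : R) : (a%:C ^+ 2) = (a ^+ 2)%:C :> R[i].
Proof. by rewrite rmorphXn. Qed.
Lemma Clt (a b : R) : (a%:C < b%:C :> R[i]) = (a < b).
Proof. by rewrite ltcE /= eqxx. Qed.
Lemma small0 (a : R[i]) : (forall e, 0 < e -> `|a| <= e) -> a = 0.
Proof.
move=> h; apply/eqP; apply/negPn/negP => a0.
have na : 0 < `|a| by rewrite normr_gt0.
have := h (`|a| / 2) (divr_gt0 na (ltr0n _ 2)).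
by rewrite ler_pdivlMr ?ltr0n // -{2}[`|a|]mulr1 ler_pM2l // lt_geF // ltr1n.
Qed.
End Creal.

Section Wop.
Variable R : realType.
Variable V : completeNormedModType R[i].
Variable ip : V -> V -> R[i].
Hypothesis Hip : inner_product ip.
Variables (U Ui : V -> V).
Hypothesis UA : forall (a : R[i]) x y, U (a *: x + y) = a *: U x + U y.
Hypothesis Uip : forall x y, ip (U x) (U y) = ip x y.
Hypothesis UiK : cancel U Ui.
Hypothesis UKi : cancel Ui U.

Lemma UiA a x y : Ui (a *: x + y) = a *: Ui x + Ui y.
Proof. by apply: (can_inj UiK); rewrite UA !UKi. Qed.
Lemma Uiip x y : ip (Ui x) (Ui y) = ip x y.
Proof. by rewrite -Uip !UKi. Qed.

Definition W (n : int) : V -> V :=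
  match n with Posz m => iter m U | Negz m => iter m.+1 Ui end.

Lemma iterA (F : V -> V) m : (forall a x y, F (a *: x + y) = a *: F x + F y) ->
  forall a x y, iter m F (a *: x + y) = a *: iter m F x + iter m F y.
Proof. by move=> FA; elim: m => [//|m IH] a x y; rewrite !iterS IH FA. Qed.
Lemma iterip (F : V -> V) m : (forall x y, ip (F x) (F y) = ip x y) ->
  forall x y, ip (iter m F x) (iter m F y) = ip x y.
Proof. by move=> Fi; elim: m => [//|m IH] x y; rewrite !iterS Fi IH. Qed.
Lemma iterK (F G : V -> V) m : cancel F G -> cancel (iter m F) (iter m G).
Proof. by move=> FG; elim: m => [//|m IH] x; rewrite iterSr iterS FG IH. Qed.

Lemma WA n a x y : W n (a *: x + y) = a *: W n x + W n y.
Proof. by case: n => m; apply: iterA => //; apply: UiA. Qed.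
Lemma W0 n : W n 0 = 0.
Proof.
have := WA n 1 0 0; rewrite !scale1r addr0 => h.
by apply/(addrI (W n 0)); rewrite addr0 -h.
Qed.
Lemma WD n x y : W n (x + y) = W n x + W n y.
Proof. by rewrite -{1}[x]scale1r WA scale1r. Qed.
Lemma WZ n a x : W n (a *: x) = a *: W n x.
Proof. by rewrite -[a *: x]addr0 WA W0 addr0. Qed.
Lemma Wsum n (I : Type) (r : seq I) (P : pred I) (F : I -> V) :
  W n (\sum_(i <- r | P i) F i) = \sum_(i <- r | P i) W n (F i).
Proof. by apply: (big_morph (W n)) => [x y|]; rewrite ?WD ?W0. Qed.
Lemma Wip n x y : ip (W n x) (W n y) = ip x y.
Proof. by case: n => m; apply: iterip => //; apply: Uiip. Qed.
Lemma WN n y : W n (W (- n) y) = y.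
Proof.
case: n => [[|m]|m]; [by [] | exact: (iterK m.+1 UKi) | exact: (iterK m.+1 UiK)].
Qed.
Lemma Wadj n x y : ip (W n x) y = ip x (W (- n) y).
Proof. by rewrite -{1}(WN n y) Wip. Qed.

Variable Lp : set V.
Lemma W_in n y : Lp y -> upow_set U n Lp (W n y).
Proof.
case: n => m Ly; first by exists y.
change (Lp (iter m.+1 U (iter m.+1 Ui y))); by rewrite (iterK m.+1 UKi).
Qed.
Lemma W_out n z : upow_set U n Lp z -> exists2 y, Lp y & z = W n y.
Proof.
case: n => m; first by move=> [y Ly <-]; exists y.
move=> Lz; exists (iter m.+1 U z) => //; symmetry; exact: (iterK m.+1 UiK).
Qed.

Hypothesis Hw : wandering ip U Lp.
Lemma W_orth n m x y : n != m -> Lp x -> Lp y -> ip (W n x) (W m y) = 0.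
Proof. by move=> nm Lx Ly; apply: Hw.2 nm _ _ (W_in n Lx) (W_in m Ly). Qed.

Variable f : seq V.
Hypothesis fon : Defs.orthonormal ip f.
Hypothesis fL : forall k, (k < size f)%N -> Lp f`_k.
Hypothesis Lf : forall y, Lp y -> y = prj ip f y.

Definition vv n j := W n f`_j.
Lemma vv_on n m j l : (j < size f)%N -> (l < size f)%N ->
  ip (vv n j) (vv m l) = ((n == m) && (j == l))%:R.
Proof.
move=> jf lf; have [<-|nm] := eqVneq n m.
  by rewrite /vv Wip fon.
by rewrite /vv W_orth //; apply: fL.
Qed.

Definition zi (N t : nat) : int := t%:Z - N%:Z.
Definition ss (N : nat) x : V :=
  \sum_(t < (N + N).+1) \sum_(j < size f) ip x (vv (zi N t) j) *: vv (zi N t) j.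

Lemma ss_v N x n j : (absz n <= N)%N -> (j < size f)%N ->
  ip (ss N x) (vv n j) = ip x (vv n j).
Proof.
move=> nN jf.
have t0P : (absz (n + N%:Z)%R < (N + N).+1)%N by lia.
rewrite /ss (ip_suml Hip) (bigD1 (Ordinal t0P)) //=.
rewrite [X in _ + X = _]big1 ?addr0; last first.
  move=> t tt0; rewrite (ip_suml Hip) big1 // => l _.
  rewrite (ipZl Hip) vv_on // (_ : (zi N t == n) = false) ?mulr0 //.
  apply/negbTE; apply: contra tt0 => /eqP h; apply/eqP; apply: val_inj => /=.
  move: h; rewrite /zi => h; lia.
rewrite (ip_suml Hip) (bigD1 (Ordinal jf)) //= [X in _ + X = _]big1 ?addr0; last first.
  move=> l lj; rewrite (ipZl Hip) vv_on //.
  rewrite (_ : (l == j :> nat) = false) ?andbF ?mulr0 //; exact/negbTE.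
rewrite (ipZl Hip) vv_on // (_ : zi N _ = n); last by rewrite /zi; lia.
by rewrite !eqxx mulr1.
Qed.


Definition rr N x := ip (ss N x) (ss N x).

Lemma ip_ss_ss K M x : (M <= K)%N -> ip (ss K x) (ss M x) =
  \sum_(t < (M + M).+1) \sum_(j < size f)
     (ip x (vv (zi M t) j))^* * ip x (vv (zi M t) j).
Proof.
move=> MK; rewrite {2}/ss (ip_sumr Hip); apply: eq_bigr => t _.
rewrite (ip_sumr Hip); apply: eq_bigr => j _.
rewrite (ipZr Hip) ss_v //; rewrite /zi; have := ltn_ord t; lia.
Qed.

Lemma ss_perp N x n j : (absz n <= N)%N -> (j < size f)%N ->
  ip (x - ss N x) (vv n j) = 0.
Proof. by move=> nN jf; rewrite (ipBl Hip) ss_v // subrr. Qed.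

Lemma ss_perp_ss N x : ip (x - ss N x) (ss N x) = 0.
Proof.
rewrite {2}/ss (ip_sumr Hip) big1 // => t _; rewrite (ip_sumr Hip) big1 // => j _.
rewrite (ipZr Hip) ss_perp ?mulr0 //; rewrite /zi; have := ltn_ord t; lia.
Qed.

Lemma rr_le N x : rr N x <= ip x x.
Proof.
have hp := ss_perp_ss N x; rewrite /rr.
set s := ss N x in hp *; set d := x - s in hp *.
have e : x = d + s by rewrite /d subrK.
have -> : ip x x = ip d d + ip s s.
  clearbody s d; rewrite e (ipDl Hip) !(ipDr Hip) hp.
  rewrite [ip s d](ipC Hip) hp conjc0; ring.
by rewrite lerDr; apply: ipxx_ge0.
Qed.

Lemma rr_diff M N x : (M <= N)%N ->
  ip (ss N x - ss M x) (ss N x - ss M x) = rr N x - rr M x.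
Proof.
move=> MN.
have h1 : ip (ss N x) (ss M x) = rr M x by rewrite /rr !ip_ss_ss.
have h2 : ip (ss M x) (ss N x) = rr M x.
  by rewrite (ipC Hip) h1 /rr -(ipC Hip).
rewrite !(ipBl Hip) !(ipBr Hip) h1 h2 /rr; ring.
Qed.

Lemma rr_mono x : {homo rr ^~ x : M N / (M <= N)%N >-> M <= N}.
Proof. by move=> M N MN; rewrite -subr_ge0 -rr_diff //; apply: ipxx_ge0. Qed.

Lemma ss_cvg x : cvg ((fun N => ss N x) @ \oo).
Proof.
apply: cauchy_cvg; apply: cauchy_exP => eps e0.
pose rho N := complex.Re (rr N x).
have rrE N : rr N x = (rho N)%:C by apply: CrealE; apply: ipxx_ge0.
have rho_mono : {homo rho : n m / (n <= m)%N >-> n <= m}.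
  by move=> n m nm; move: (rr_mono x nm); rewrite !rrE lecE /= => /andP[_].
have rho_ub : has_ubound (range rho).
  exists (complex.Re (ip x x)) => _ [n _ <-].
  by have := rr_le n x; rewrite rrE lecE /= => /andP[_].
have rcv := nondecreasing_cvgn rho_mono rho_ub.
set l := sup (range rho) in rcv.
have rle n : rho n <= l by apply: ub_le_sup rho_ub _ _; exists n.
have re0 : 0 < complex.Re eps by move: e0; rewrite ltcE /= => /andP[_].
have epsE : eps = (complex.Re eps)%:C := CrealE (ltW e0).
set d := (complex.Re eps) ^+ 2.
have d0 : 0 < d by rewrite exprn_gt0.
have [N0 _ hN0] := (cvgrPdist_lt _ _).1 rcv d d0.
exists (ss N0 x); exists N0 => // m hm.
rewrite -ball_normE /ball_ /= distrC.
rewrite -(ltr_pXn2r (n:=2)) ?nnegrE ?(ltW e0) //.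
rewrite -(ipxx Hip) rr_diff // !rrE [X in _ < X ^+ 2]epsE CB CX Clt.
have h0 := hN0 N0 (leqnn N0).
apply: le_lt_trans h0.
by rewrite (le_trans _ (ler_norm _)) // lerD2r rle.
Qed.


Definition pm x := lim ((fun N => ss N x) @ \oo).
Lemma pm_cvg x : (fun N => ss N x) @ \oo --> pm x.
Proof. exact: ss_cvg. Qed.

Let G := [set y | exists n : int, upow_set U n Lp y].

Lemma vv_G n j : (j < size f)%N -> G (vv n j).
Proof. by move=> jf; exists n; apply: W_in; apply: fL. Qed.

Lemma vv_M n j : (j < size f)%N -> Mspace U Lp (vv n j).
Proof. by move=> jf; apply: subset_closure; apply: span_in; apply: vv_G. Qed.

Lemma ss_M N x : Mspace U Lp (ss N x).
Proof.
apply: subset_closure; apply: lin_sum => [|t _]; first exact: span_lin.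
apply: lin_sum => [|j _]; first exact: span_lin.
apply: lin_scale; first exact: span_lin.
by apply: span_in; apply: vv_G.
Qed.

Lemma pm_M x : Mspace U Lp (pm x).
Proof.
have h := (@closed_cvg _ _ _ _ (fun N => ss N x) (closure (Defs.span G)) (@closed_closure _ (Defs.span G)) (nearW _ (fun N => @ss_M N x)) (pm x) (@pm_cvg x)). exact: h.
Qed.

Lemma pm_perp_v x n j : (j < size f)%N -> ip (x - pm x) (vv n j) = 0.
Proof.
move=> jf; apply: small0 => e e0.
set c := `|vv n j| + 1.
have c0 : 0 < c by rewrite /c ltr_pwDr.
have [N1 _ h1] := (cvgrPdist_lt _ _).1 (@pm_cvg x) (e / c) (divr_gt0 e0 c0).
set N := maxn N1 (absz n).
have -> : x - pm x = (x - ss N x) + (ss N x - pm x) by rewrite addrA subrK.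
rewrite (ipDl Hip) ss_perp ?add0r //; last by rewrite /N leq_maxr.
apply: le_trans (CS Hip _ _) _.
rewrite -[e](@divfK _ c) ?gt_eqF //.
apply: ler_pM => //.
  rewrite distrC; apply: ltW; apply: h1; rewrite /= /N leq_maxl //.
by rewrite /c lerDl.
Qed.

Lemma pm_perp x y : Mspace U Lp y -> ip (x - pm x) y = 0.
Proof.
set z := x - pm x.
have E : lin_closed (fun y => ip z y = 0).
  split; first exact: ip0r.
  by move=> a y1 y2 h1 h2; rewrite (ipDr Hip) (ipZr Hip) h1 h2 mulr0 addr0.
have S1 : Defs.span G `<=` (fun y => ip z y = 0).
  apply: span_sub => // w [n /W_out [y0 Ly0 ->]].
  rewrite (Lf Ly0) /prj Wsum (ip_sumr Hip) big1 // => k _.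
  by rewrite WZ (ipZr Hip) pm_perp_v ?mulr0.
move=> My; apply: small0 => e e0.
set c := `|z| + 1.
have c0 : 0 < c by rewrite /c ltr_pwDr.
have [y' [Sy' By']] := My _ (nbhsx_ballx y _ (divr_gt0 e0 c0)).
move: By'; rewrite -ball_normE /ball_ /= => By'.
have -> : y = (y - y') + y' by rewrite subrK.
rewrite (ipDr Hip) (S1 y' Sy') addr0.
apply: le_trans (CS Hip _ _) _.
rewrite -[e](@divfK _ c) ?gt_eqF // mulrC.
apply: ler_pM => //; first exact: ltW.
by rewrite /c lerDl.
Qed.

Lemma pm_oproj x : oproj ip (Mspace U Lp) x = pm x.
Proof. exact: (oproj_eq Hip (@pm_M x) (@pm_perp x)). Qed.

Lemma oproj_vv n j : (j < size f)%N -> oproj ip (Mspace U Lp) (vv n j) = vv n j.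
Proof.
move=> jf; apply: (oproj_eq Hip (@vv_M n j jf)) => y _.
by rewrite subrr (ip0l Hip).
Qed.


Lemma on_combI (e : seq V) (c : 'I_(size e) -> R[i]) (j : 'I_(size e)) :
  Defs.orthonormal ip e -> ip (\sum_(k < size e) c k *: e`_k) e`_j = c j.
Proof.
move=> oe; rewrite (ip_suml Hip) (bigD1 j) //= big1 => [|k kj].
  by rewrite (ipZl Hip) oe // eqxx mulr1 addr0.
by rewrite (ipZl Hip) oe // (_ : (k == j :> nat) = false) ?mulr0 //; apply/negbTE.
Qed.

Lemma comb_projI (e : seq V) (c : 'I_(size e) -> R[i]) :
  Defs.orthonormal ip e -> \sum_(k < size e) c k *: e`_k = prj ip e (\sum_(k < size e) c k *: e`_k).
Proof. by move=> oe; apply: eq_bigr => k _; rewrite on_combI. Qed.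

Variable L : set V.
Variable e : seq V.
Hypothesis eon : Defs.orthonormal ip e.
Hypothesis PL : forall x, oproj ip L x = prj ip e x.

Definition Aseq N := \sum_(t < (N + N).+1) \sum_(j < size f) \sum_(k < size e)
  ip (vv (zi N t) j) e`_k * ip e`_k (vv (zi N t) j).

Lemma trace_lim : (fun N => (Aseq N : R[i]^o)) @ \oo -->
  (Defs.trace ip (oproj ip L \o oproj ip (Mspace U Lp)) : R[i]^o).
Proof.
set T := oproj ip L \o oproj ip (Mspace U Lp).
have TE y : T y = prj ip e (pm y) by rewrite /T /= pm_oproj PL.
have Tv n j : (j < size f)%N -> T (vv n j) = prj ip e (vv n j).
  by move=> jf; rewrite /T /= oproj_vv // PL.
rewrite /Defs.trace; case: xgetP => [g _ [gon gT]|]; last first.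
  by move=> /(_ e) []; split => // x; exists (fun i => ip (pm x) e`_i); rewrite TE.
have step1 : \sum_(i < size g) ip (T g`_i) g`_i =
    \sum_(i < size g) ip (pm g`_i) (prj ip e g`_i).
  by apply: eq_bigr => i _; rewrite TE (proj_sa Hip).
rewrite /= step1.
have step2 N : Aseq N = \sum_(i < size g) ip (ss N g`_i) (prj ip e g`_i).
  rewrite /Aseq /ss.
  under [RHS]eq_bigr do rewrite (ip_suml Hip).
  rewrite [RHS]exchange_big; apply: eq_bigr => t _ /=.
  under [RHS]eq_bigr do rewrite (ip_suml Hip).
  rewrite [RHS]exchange_big; apply: eq_bigr => j _ /=.
  set v := vv (zi N t) j.
  have jf : (j < size f)%N := ltn_ord j.
  set w := prj ip e v.
  have hw : w = prj ip g w.
    have [c hc] := gT v; rewrite /w -Tv // hc; exact: comb_projI.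
  have -> : \sum_(k < size e) ip v e`_k * ip e`_k v = ip w v.
    by rewrite /w /prj (ip_suml Hip); apply: eq_bigr => k _; rewrite (ipZl Hip).
  rewrite {1}hw /prj (ip_suml Hip); apply: eq_bigr => i _.
  by rewrite (ipZl Hip) (ipZl Hip) -(proj_sa Hip) mulrC.
have -> : (fun N => (Aseq N : R[i]^o)) =
    (fun N => \sum_(i < size g) (ip (ss N g`_i) (prj ip e g`_i) : R[i]^o)).
  by apply: funext => N; rewrite step2.
apply: cvg_sumC => i; apply: (ip_cvgl Hip); exact: pm_cvg.
Qed.

Lemma zi_rev N (t : 'I_(N + N).+1) : zi N (rev_ord t) = - zi N t.
Proof. rewrite /zi /=; have := ltn_ord t; lia. Qed.

Lemma Aseq_sym N : Aseq N = \sum_(t < (N + N).+1) \sum_(j < size e) \sum_(k < size f)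
  ip (W (zi N t) e`_j) f`_k * ip f`_k (W (zi N t) e`_j).
Proof.
rewrite /Aseq (reindex_inj rev_ord_inj) /=; apply: eq_bigr => t _.
rewrite exchange_big; apply: eq_bigr => k _; apply: eq_bigr => j _.
rewrite /vv zi_rev Wadj opprK [ip e`_k _](ipC Hip) Wadj opprK mulrC.
by rewrite -(ipC Hip).
Qed.

End Wop.

End Helpers.
Import Helpers.
Unset Implicit Arguments.
Set Strict Implicit.

Theorem lemma5 (R : realType) (V : completeNormedModType R[i])
  (ip : V -> V -> R[i]) (Hip : inner_product ip)
  (U : V -> V) (HU : unitary ip U) (L L' : set V) :
  wandering ip U L -> finite_dim L ->
  wandering ip U L' -> finite_dim L' ->
  trace ip (oproj ip L \o oproj ip (Mspace U L')) =
  trace ip (oproj ip L' \o oproj ip (Mspace U L)).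
Proof.
move=> HwL [s Ls] HwL' [s' Ls'].
case: HU => UA [Ui UiK UKi] Uip.
have [e [eon es ep]] := GS Hip s.
have [f [fon fs fp]] := GS Hip s'.
subst L L'.
have PL x : oproj ip (Defs.span [set` s]) x = prj ip e x := oproj_fd Hip x eon es ep.
have PL' x : oproj ip (Defs.span [set` s']) x = prj ip f x := oproj_fd Hip x fon fs fp.
have h1 := trace_lim Hip UA Uip UiK UKi HwL' fon fs fp eon PL.
have h2 := trace_lim Hip UA Uip UiK UKi HwL eon es ep fon PL'.
have hs : hausdorff_space (R[i]^o) by apply: norm_hausdorff.
rewrite -(cvg_lim hs h1) -(cvg_lim hs h2).
suff -> : (fun N => (Aseq ip U Ui f e N : R[i]^o)) = (fun N => Aseq ip U Ui e f N) by [].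
by apply: funext => N; rewrite Aseq_sym.
Qed.
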